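(* Let $T$ be a triangle from a shape-regular family ($h_T\le\varrho r_T$), $\Gamma_{h,T}$ an open line segment with endpoints on $\partial T$ dividing $T$ into nonempty open parts $T_h^\pm$, and $\mu^\pm>0$. There is a constant $C>0$ independent of $h_T$ and of the location of $\Gamma_{h,T}$ such that $$h_T\|[\![q_h^\pm]\!]\|^2_{L^2(\Gamma_{h,T})}\le C|\mathbf{v}_h|^2_{H^1(T)}\qquad\forall(\mathbf{v}_h,q_h)\in\mathbf{V}M_h^{IFE}(T),$$ where $[\![q_h^\pm]\!]=q_h^+-q_h^-$.
   Context: $\mathbf{n}_h$ is the unit normal of $\Gamma_{h,T}$ pointing into $T_h^+$; $\sigma(\mu,\mathbf{v},q)=2\mu\boldsymbol{\epsilon}(\mathbf{v})-q\mathbb{I}$, $\boldsymbol{\epsilon}(\mathbf{v})=\frac12(\nabla\mathbf{v}+(\nabla\mathbf{v})^T)$. $\mathbf{V}M_h^{IFE}(T)$ is the set of pairs $(\mathbf{v},q)$ equal to $(\mathbf{v}^\pm,q^\pm)$ on $T_h^\pm$, where $\mathbf{v}^\pm\in P_1(T)^2$, $q^\pm\in P_0(T)$ satisfy $\sigma(\mu^+,\mathbf{v}^+,q^+)\mathbf{n}_h=\sigma(\mu^-,\mathbf{v}^-,q^-)\mathbf{n}_h$, $\mathbf{v}^+=\mathbf{v}^-$ on $\Gamma_{h,T}$, $\nabla\cdot\mathbf{v}^+=\nabla\cdot\mathbf{v}^-$; $q_h^\pm$ denote the constant pieces of $q_h$. *)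

(* Defs.v *)
From HB Require Import structures.
From mathcomp Require Import all_boot all_order all_algebra.
From mathcomp Require Import all_classical all_reals all_analysis.
Set Implicit Arguments. Unset Strict Implicit. Unset Printing Implicit Defensive.
Import Order.TTheory GRing.Theory Num.Theory.
Local Open Scope classical_set_scope.
Local Open Scope ring_scope.

Definition xc (R : realType) (u : 'cV[R]_2) : R := u ord0 ord0.
Definition yc (R : realType) (u : 'cV[R]_2) : R := u ord_max ord0.
Definition mkv (R : realType) (a b : R) : 'cV[R]_2 :=
  \col_i (if i == ord0 then a else b).

Definition dotv (R : realType) (u v : 'cV[R]_2) : R := xc u * xc v + yc u * yc v.
Definition normv (R : realType) (u : 'cV[R]_2) : R := Num.sqrt (dotv u u).
Definition rot (R : realType) (u : 'cV[R]_2) : 'cV[R]_2 := mkv (- yc u) (xc u).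

Definition lam2 (R : realType) (S : set 'cV[R]_2) : \bar R :=
  ((@lebesgue_measure R) \x (@lebesgue_measure R))%E
    [set p : R * R | S (mkv p.1 p.2)].
Definition area (R : realType) (S : set 'cV[R]_2) : R := fine (lam2 S).

Definition cseg (R : realType) (a b : 'cV[R]_2) : set 'cV[R]_2 :=
  [set x | exists t : R, 0 <= t <= 1 /\ x = (1 - t) *: a + t *: b].
Definition oseg (R : realType) (a b : 'cV[R]_2) : set 'cV[R]_2 :=
  [set x | exists t : R, 0 < t < 1 /\ x = (1 - t) *: a + t *: b].

Definition tri_det (R : realType) (a b c : 'cV[R]_2) : R :=
  xc (b - a) * yc (c - a) - yc (b - a) * xc (c - a).
Definition tri_nondeg (R : realType) (a b c : 'cV[R]_2) : Prop :=
  tri_det a b c != 0.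
Definition tri (R : realType) (a b c : 'cV[R]_2) : set 'cV[R]_2 :=
  [set x | exists l1 l2 l3 : R, [/\ 0 < l1, 0 < l2, 0 < l3, l1 + l2 + l3 = 1 &
     x = l1 *: a + l2 *: b + l3 *: c]].
Definition tri_bd (R : realType) (a b c : 'cV[R]_2) : set 'cV[R]_2 :=
  cseg a b `|` cseg b c `|` cseg c a.
(* diameter h_T (= longest edge) *)
Definition diam (R : realType) (a b c : 'cV[R]_2) : R :=
  Num.max (normv (b - a)) (Num.max (normv (c - b)) (normv (a - c))).
(* inradius r_T = 2 |T| / perimeter *)
Definition inradius (R : realType) (a b c : 'cV[R]_2) : R :=
  `|tri_det a b c| / (normv (b - a) + normv (c - b) + normv (a - c)).

(* interface segment Gamma = ]p1,p2[, unit normal n_h, and subelements T^+/T^- *)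
Definition nrm (R : realType) (p1 p2 : 'cV[R]_2) : 'cV[R]_2 :=
  (normv (p2 - p1))^-1 *: rot (p2 - p1).
Definition Tplus (R : realType) (a b c p1 p2 : 'cV[R]_2) : set 'cV[R]_2 :=
  [set x | tri a b c x /\ 0 < dotv (x - p1) (nrm p1 p2)].
Definition Tminus (R : realType) (a b c p1 p2 : 'cV[R]_2) : set 'cV[R]_2 :=
  [set x | tri a b c x /\ dotv (x - p1) (nrm p1 p2) < 0].

(* An element v of P_1(T)^2 is x |-> G *m x + w; its gradient is G. *)
Definition epsm (R : realType) (G : 'M[R]_2) : 'M[R]_2 := 2^-1 *: (G + G^T).
Definition sigma (R : realType) (mu : R) (G : 'M[R]_2) (q : R) : 'M[R]_2 :=
  (2 * mu) *: epsm G - q%:M.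

(* (v,q) in VM_h^IFE(T): v = (G^+ x + w^+, G^- x + w^-), q = (q^+, q^-) *)
Definition IFE (R : realType) (mup mum : R) (p1 p2 : 'cV[R]_2)
  (Gp : 'M[R]_2) (wp : 'cV[R]_2) (qp : R)
  (Gm : 'M[R]_2) (wm : 'cV[R]_2) (qm : R) : Prop :=
  [/\ sigma mup Gp qp *m nrm p1 p2 = sigma mum Gm qm *m nrm p1 p2,
      (forall x, oseg p1 p2 x -> Gp *m x + wp = Gm *m x + wm) &
      \tr Gp = \tr Gm].

Definition frob2 (R : realType) (G : 'M[R]_2) : R := \sum_i \sum_j (G i j) ^+ 2.

(* |v|_{H^1(T)}^2 = int_{T^+} |grad v^+|^2 + int_{T^-} |grad v^-|^2 *)
Definition H1semi2 (R : realType) (a b c p1 p2 : 'cV[R]_2) (Gp Gm : 'M[R]_2) : R :=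
  area (Tplus a b c p1 p2) * frob2 Gp + area (Tminus a b c p1 p2) * frob2 Gm.

(* ||[[q]]||^2_{L^2(Gamma)} for piecewise constant q: |Gamma| (q^+ - q^-)^2 *)
Definition jumpL2sq (R : realType) (p1 p2 : 'cV[R]_2) (qp qm : R) : R :=
  normv (p2 - p1) * (qp - qm) ^+ 2.

(* Main.v *)
Require Import Defs.
From HB Require Import structures.
From mathcomp Require Import all_boot all_order all_algebra.
From mathcomp Require Import all_classical all_reals all_analysis.
From mathcomp Require Import ring lra measurable_realfun.
Import Order.TTheory GRing.Theory Num.Theory.
Local Open Scope classical_set_scope.
Local Open Scope ring_scope.
Set Implicit Arguments. Unset Strict Implicit.


Section Core.
Variable R : realType.
Implicit Types x : R.

Lemma cs2 (n1 n2 v1 v2 : R) : n1^+2 + n2^+2 = 1 ->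
  (n1 * v1 + n2 * v2)^+2 <= v1^+2 + v2^+2.
Proof. move=> h. have -> : v1^+2 + v2^+2 = (n1 * v1 + n2 * v2)^+2 + (n2*v1 - n1*v2)^+2.
  by rewrite -[v1^+2]mul1r -[v2^+2]mul1r -h; ring.
by rewrite lerDl sqr_ge0. Qed.

Lemma core (mup mum n1 n2 g11 g12 g21 g22 h11 h12 h21 h22 qp qm : R) :
  0 < mup -> 0 < mum -> n1^+2 + n2^+2 = 1 ->
  2*mup*(g11*n1 + (g12+g21)/2*n2) - qp*n1 = 2*mum*(h11*n1 + (h12+h21)/2*n2) - qm*n1 ->
  2*mup*((g12+g21)/2*n1 + g22*n2) - qp*n2 = 2*mum*((h12+h21)/2*n1 + h22*n2) - qm*n2 ->
  (g11 - h11) * n2 - (g12 - h12) * n1 = 0 ->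
  (g21 - h21) * n2 - (g22 - h22) * n1 = 0 ->
  g11 + g22 = h11 + h22 ->
  let Fp := g11^+2 + g12^+2 + g21^+2 + g22^+2 in
  let Fm := h11^+2 + h12^+2 + h21^+2 + h22^+2 in
  let M := (1 + mup/mum + mum/mup)^+2 in
  [/\ Fp <= (2 + 4*M) * Fm, Fm <= (2 + 4*M) * Fp &
      (qp - qm)^+2 <= 8*mup^+2 * Fp + 8*mum^+2 * Fm].
Proof.
move=> mup0 mum0 un E1 E2 Dt1 Dt2 tr Fp Fm M.
set d11 := g11 - h11; set d12 := g12 - h12; set d21 := g21 - h21; set d22 := g22 - h22.
pose al := n2 * (d11*n1 + d12*n2) - n1 * (d21*n1 + d22*n2).
pose FD := d11^+2 + d12^+2 + d21^+2 + d22^+2.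
have beta0 : n1 * (d11*n1 + d12*n2) + n2 * (d21*n1 + d22*n2) = 0.
  have : n1 * (d11*n1 + d12*n2) + n2 * (d21*n1 + d22*n2)
     + (n2 * (d11 * n2 - d12 * n1) - n1 * (d21*n2 - d22*n1)) = (d11 + d22) * (n1^+2+n2^+2).
    by ring.
  have trD : d11 + d22 = 0 by rewrite /d11 /d22; lra.
  rewrite Dt1 Dt2 un trD mulr1 => H. lra.
have FDal : FD = al^+2.
  have h1 : FD = (d11*n1 + d12*n2)^+2 + (d21*n1+d22*n2)^+2 + (d11 * n2 - d12 * n1)^+2 + (d21*n2 - d22*n1)^+2.
    rewrite -[FD]mulr1 -un /FD; ring.
  have h2 : (d11*n1 + d12*n2)^+2 + (d21*n1+d22*n2)^+2 = al^+2 + (n1 * (d11*n1 + d12*n2) + n2 * (d21*n1 + d22*n2))^+2.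
    rewrite -[_ + _ in LHS]mulr1 -un /al; ring.
  by rewrite h1 h2 beta0 Dt1 Dt2; ring.
pose Sp := n2 * (g11*n1 + g12*n2) - n1 * (g21*n1 + g22*n2) + (n1 * (g11 * n2 - g12 * n1) + n2 * (g21*n2 - g22*n1)).
pose Sm := n2 * (h11*n1 + h12*n2) - n1 * (h21*n1 + h22*n2) + (n1 * (h11 * n2 - h12 * n1) + n2 * (h21*n2 - h22*n1)).
have tang : mup * Sp = mum * Sm.
  apply/eqP; rewrite -subr_eq0; apply/eqP.
  have -> : mup*Sp - mum*Sm = (n2*(2*mup*(g11*n1 + (g12+g21)/2*n2) - qp*n1) - n1*(2*mup*((g12+g21)/2*n1 + g22*n2) - qp*n2)) - (n2*(2*mum*(h11*n1 + (h12+h21)/2*n2) - qm*n1) - n1*(2*mum*((h12+h21)/2*n1 + h22*n2) - qm*n2)) by rewrite /Sp /Sm; field.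
  by rewrite E1 E2 subrr.
have Sdiff : Sp - Sm = al.
  have : n1 * (d11 * n2 - d12 * n1) + n2 * (d21*n2 - d22*n1) = 0 by rewrite Dt1 Dt2; ring.
  move=> HH; rewrite /Sp /Sm /al; rewrite /d11 /d12 /d21 /d22 in HH *; lra.
have SF (a b c d : R) : (n2 * (a*n1 + b*n2) - n1 * (c*n1 + d*n2) + (n1 * (a * n2 - b * n1) + n2 * (c*n2 - d*n1)))^+2 <= 2 * (a^+2+b^+2+c^+2+d^+2).
  set u := n2 * (a*n1 + b*n2) - n1 * (c*n1 + d*n2).
  set v := n1 * (a * n2 - b * n1) + n2 * (c*n2 - d*n1).
  have hu : u^+2 <= (a*n1 + b*n2)^+2 + (c*n1 + d*n2)^+2.
    have := @cs2 n2 (-n1) (a*n1 + b*n2) (c*n1 + d*n2). rewrite sqrrN addrC un => /(_ erefl).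
    by rewrite /u mulNr.
  have hv : v^+2 <= (a * n2 - b * n1)^+2 + (c*n2 - d*n1)^+2.
    exact: cs2.
  have hs : (a*n1 + b*n2)^+2 + (c*n1 + d*n2)^+2 + ((a * n2 - b * n1)^+2 + (c*n2 - d*n1)^+2) = a^+2+b^+2+c^+2+d^+2.
    rewrite -[a^+2+_+_+_]mulr1 -un; ring.
  have : (u+v)^+2 <= 2*(u^+2 + v^+2) by have := sqr_ge0 (u - v); lra.
  lra.
have SpF : Sp^+2 <= 2 * Fp by exact: SF.
have SmF : Sm^+2 <= 2 * Fm by exact: SF.
have M1 : 1 <= M.
  rewrite /M. have : 0 <= mup/mum by apply: divr_ge0; lra.
  have : 0 <= mum/mup by apply: divr_ge0; lra. nra.
have alp : al^+2 <= 2 * M * Fp.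
  have e1 : Sm = mup * Sp / mum by rewrite tang; field; lra.
  have -> : al = Sp * (1 - mup/mum) by rewrite -Sdiff e1; field; lra.
  rewrite exprMn.
  have : (1 - mup/mum)^+2 <= M.
    rewrite /M. have : 0 <= mup/mum by apply: divr_ge0; lra.
    have : 0 <= mum/mup by apply: divr_ge0; lra. nra.
  have := sqr_ge0 Sp; have := sqr_ge0 (1 - mup/mum). nra.
have alm : al^+2 <= 2 * M * Fm.
  have e1 : Sp = mum * Sm / mup by rewrite -tang; field; lra.
  have -> : al = Sm * (mum/mup - 1) by rewrite -Sdiff e1; field; lra.
  rewrite exprMn.
  have : (mum/mup - 1)^+2 <= M.
    rewrite /M. have : 0 <= mup/mum by apply: divr_ge0; lra.
    have : 0 <= mum/mup by apply: divr_ge0; lra. nra.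
  have := sqr_ge0 Sm; have := sqr_ge0 (mum/mup - 1). nra.
have FpFD : Fp <= 2 * Fm + 2 * FD.
  rewrite /Fp /Fm /FD /d11 /d12 /d21 /d22.
  have := sqr_ge0 (2*h11 - g11); have := sqr_ge0 (2*h12 - g12);
  have := sqr_ge0 (2*h21 - g21); have := sqr_ge0 (2*h22 - g22). nra.
have FmFD : Fm <= 2 * Fp + 2 * FD.
  rewrite /Fp /Fm /FD /d11 /d12 /d21 /d22.
  have := sqr_ge0 (2*g11 - h11); have := sqr_ge0 (2*g12 - h12);
  have := sqr_ge0 (2*g21 - h21); have := sqr_ge0 (2*g22 - h22). nra.
split.
- rewrite FDal in FpFD. lra.
- rewrite FDal in FmFD. lra.
- have jq : qp - qm = 2*mup*(n1*(g11*n1 + g12*n2) + n2*(g21*n1+g22*n2)) - 2*mum*(n1*(h11*n1 + h12*n2) + n2*(h21*n1+h22*n2)).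
    apply/eqP; rewrite -subr_eq0; apply/eqP.
    have -> : qp - qm - (2*mup*(n1*(g11*n1 + g12*n2) + n2*(g21*n1+g22*n2)) - 2*mum*(n1*(h11*n1 + h12*n2) + n2*(h21*n1+h22*n2)))
      = - ((n1*(2*mup*(g11*n1 + (g12+g21)/2*n2) - qp*n1) + n2*(2*mup*((g12+g21)/2*n1 + g22*n2) - qp*n2)) - (n1*(2*mum*(h11*n1 + (h12+h21)/2*n2) - qm*n1) + n2*(2*mum*((h12+h21)/2*n1 + h22*n2) - qm*n2))) + (qp - qm) * (1 - (n1^+2 + n2^+2)) by field.
    by rewrite E1 E2 un !subrr oppr0 mulr0 addr0.
  set u := n1*(g11*n1 + g12*n2) + n2*(g21*n1+g22*n2) in jq.
  set v := n1*(h11*n1 + h12*n2) + n2*(h21*n1+h22*n2) in jq.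
  have hu : u^+2 <= Fp.
    rewrite /u.
    have := @cs2 n1 n2 (g11*n1 + g12*n2) (g21*n1+g22*n2) un.
    have : (g11*n1 + g12*n2)^+2 + (g21*n1+g22*n2)^+2 <= Fp.
      have -> : Fp = (g11*n1 + g12*n2)^+2 + (g21*n1+g22*n2)^+2 + ((g11 * n2 - g12 * n1)^+2 + (g21*n2 - g22*n1)^+2).
        rewrite -[Fp]mulr1 -un /Fp; ring.
      rewrite lerDl; apply: addr_ge0; exact: sqr_ge0.
    lra.
  have hv : v^+2 <= Fm.
    rewrite /v.
    have := @cs2 n1 n2 (h11*n1 + h12*n2) (h21*n1+h22*n2) un.
    have : (h11*n1 + h12*n2)^+2 + (h21*n1+h22*n2)^+2 <= Fm.
      have -> : Fm = (h11*n1 + h12*n2)^+2 + (h21*n1+h22*n2)^+2 + ((h11 * n2 - h12 * n1)^+2 + (h21*n2 - h22*n1)^+2).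
        rewrite -[Fm]mulr1 -un /Fm; ring.
      rewrite lerDl; apply: addr_ge0; exact: sqr_ge0.
    lra.
  rewrite jq.
  have := sqr_ge0 (2*mup*u + 2*mum*v).
  have : (2*mup)^+2 * u^+2 <= (2*mup)^+2 * Fp by apply: ler_wpM2l; [exact: sqr_ge0|].
  have : (2*mum)^+2 * v^+2 <= (2*mum)^+2 * Fm by apply: ler_wpM2l; [exact: sqr_ge0|].
  nra.
Qed.
End Core.


Section MX.
Variable R : realType.
Lemma w0 : widen_ord (leqnSn 1) (ord_max : 'I_1) = ord0 :> 'I_2.
Proof. exact: val_inj. Qed.
Lemma mul2E (A : 'M[R]_2) (v : 'cV[R]_2) (i : 'I_2) :
  (A *m v) i ord0 = A i ord0 * xc v + A i ord_max * yc v.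
Proof. by rewrite mxE !big_ord_recr big_ord0 /= add0r w0. Qed.
Lemma tr2E (A : 'M[R]_2) : \tr A = A ord0 ord0 + A ord_max ord_max.
Proof. by rewrite /mxtrace !big_ord_recr big_ord0 /= add0r w0. Qed.
Lemma frob2E (A : 'M[R]_2) : frob2 A = A ord0 ord0 ^+2 + A ord0 ord_max ^+2 + A ord_max ord0 ^+2 + A ord_max ord_max ^+ 2.
Proof. by rewrite /frob2 !big_ord_recr !big_ord0 /= !add0r !w0 addrA. Qed.
Lemma sigmaE (mu : R) (G : 'M[R]_2) q i j : sigma mu G q i j = 2 * mu * (2^-1 * (G i j + G j i)) - q * (i == j)%:R.
Proof. by rewrite /sigma /epsm !mxE mulr_natr. Qed.
Lemma cv2P (u v : 'cV[R]_2) : xc u = xc v -> yc u = yc v -> u = v.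
Proof.
move=> hx hy; apply/matrixP => i j; rewrite (ord1 j).
case: i => [[|[|k]] hk] //.
- by rewrite (_ : Ordinal hk = ord0) //; apply: val_inj.
- by rewrite (_ : Ordinal hk = ord_max) //; apply: val_inj.
Qed.
Lemma xcE (u v : 'cV[R]_2) (a : R) : xc (u + v) = xc u + xc v /\ xc (u - v) = xc u - xc v /\ xc (a *: u) = a * xc u.
Proof. by rewrite /xc !mxE. Qed.
Lemma ycE (u v : 'cV[R]_2) (a : R) : yc (u + v) = yc u + yc v /\ yc (u - v) = yc u - yc v /\ yc (a *: u) = a * yc u.
Proof. by rewrite /yc !mxE. Qed.
Lemma xc_mkv (a b : R) : xc (mkv a b) = a. Proof. by rewrite /xc /mkv mxE. Qed.
Lemma yc_mkv (a b : R) : yc (mkv a b) = b. Proof. by rewrite /yc /mkv mxE. Qed.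
Lemma xcD (u v : 'cV[R]_2) : xc (u + v) = xc u + xc v. Proof. by rewrite /xc !mxE. Qed.
Lemma xcB (u v : 'cV[R]_2) : xc (u - v) = xc u - xc v. Proof. by rewrite /xc !mxE. Qed.
Lemma xcZ (u : 'cV[R]_2) a : xc (a *: u) = a * xc u. Proof. by rewrite /xc !mxE. Qed.
Lemma ycD (u v : 'cV[R]_2) : yc (u + v) = yc u + yc v. Proof. by rewrite /yc !mxE. Qed.
Lemma ycB (u v : 'cV[R]_2) : yc (u - v) = yc u - yc v. Proof. by rewrite /yc !mxE. Qed.
Lemma ycZ (u : 'cV[R]_2) a : yc (a *: u) = a * yc u. Proof. by rewrite /yc !mxE. Qed.
Lemma xcM (A : 'M[R]_2) v : xc (A *m v) = A ord0 ord0 * xc v + A ord0 ord_max * yc v.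
Proof. exact: mul2E. Qed.
Lemma ycM (A : 'M[R]_2) v : yc (A *m v) = A ord_max ord0 * xc v + A ord_max ord_max * yc v.
Proof. exact: mul2E. Qed.
Lemma xcN (u : 'cV[R]_2) : xc (- u) = - xc u. Proof. by rewrite /xc !mxE. Qed.
Lemma ycN (u : 'cV[R]_2) : yc (- u) = - yc u. Proof. by rewrite /yc !mxE. Qed.
Definition xyE := (xcB, ycB, xcD, xcN, xcZ, ycD, ycN, ycZ, xcM, ycM, xc_mkv, yc_mkv).

Lemma nrm_unit (p1 p2 : 'cV[R]_2) : p1 != p2 -> xc (nrm p1 p2) ^+ 2 + yc (nrm p1 p2) ^+2 = 1.
Proof.
move=> p12.
set dx := xc (p2 - p1); set dy := yc (p2 - p1).
have dpos : 0 < dx^+2 + dy^+2.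
  rewrite lt_neqAle addr_ge0 ?sqr_ge0 // andbT eq_sym paddr_eq0 ?sqr_ge0 //.
  rewrite !sqrf_eq0; apply/negP => /andP [/eqP hx /eqP hy].
  move/negP: p12; apply; apply/eqP; apply/esym; apply/subr0_eq.
  apply: cv2P; [rewrite -/dx hx | rewrite -/dy hy]; by rewrite /xc /yc mxE.
set L := normv (p2 - p1).
have LL : L^+2 = dx^+2 + dy^+2.
  rewrite /L /normv sqr_sqrtr /dotv /dx /dy ?expr2 //; apply: addr_ge0; exact: mulr_ge0_le0 || nra.
have L0 : 0 < L.
  by move: dpos; rewrite /L /normv sqrtr_gt0 /dotv /dx /dy !expr2.
have n1E : xc (nrm p1 p2) = L^-1 * (- dy) by rewrite /nrm /Defs.rot xcZ xc_mkv.
have n2E : yc (nrm p1 p2) = L^-1 * dx by rewrite /nrm /Defs.rot ycZ yc_mkv.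
rewrite n1E n2E !exprMn sqrrN -mulrDr addrC -LL exprVn mulVf // expf_neq0 // lt0r_neq0 //.
Qed.

Lemma eq_via (a b c d : R) : a - b = c - d -> c = d -> a = b.
Proof. by move=> h e; apply/eqP; rewrite -subr_eq0 h e subrr. Qed.

Lemma alg_bound (mup mum : R) p1 p2 Gp wp qp Gm wm qm :
  0 < mup -> 0 < mum -> p1 != p2 -> IFE mup mum p1 p2 Gp wp qp Gm wm qm ->
  let M := (1 + mup/mum + mum/mup)^+2 in
  [/\ frob2 Gp <= (2 + 4*M) * frob2 Gm, frob2 Gm <= (2 + 4*M) * frob2 Gp &
      (qp - qm)^+2 <= 8*mup^+2 * frob2 Gp + 8*mum^+2 * frob2 Gm].
Proof.
move=> mup0 mum0 p12 [Hs Hv Htr] M.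
set dx := xc (p2 - p1); set dy := yc (p2 - p1).
have dpos : 0 < dx^+2 + dy^+2.
  rewrite lt_neqAle addr_ge0 ?sqr_ge0 // andbT eq_sym paddr_eq0 ?sqr_ge0 //.
  rewrite !sqrf_eq0; apply/negP => /andP [/eqP hx /eqP hy].
  move/negP: p12; apply; apply/eqP; apply/esym; apply/subr0_eq.
  apply: cv2P; [rewrite -/dx hx | rewrite -/dy hy]; by rewrite /xc /yc mxE.
set L := normv (p2 - p1).
have LL : L^+2 = dx^+2 + dy^+2.
  rewrite /L /normv sqr_sqrtr /dotv /dx /dy ?expr2 //; apply: addr_ge0; exact: mulr_ge0_le0 || nra.
have L0 : 0 < L.
  by move: dpos; rewrite /L /normv sqrtr_gt0 /dotv /dx /dy !expr2.
have n1E : xc (nrm p1 p2) = L^-1 * (- dy) by rewrite /nrm /Defs.rot xcZ xc_mkv.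
have n2E : yc (nrm p1 p2) = L^-1 * dx by rewrite /nrm /Defs.rot ycZ yc_mkv.
have un : xc (nrm p1 p2) ^+ 2 + yc (nrm p1 p2) ^+2 = 1.
  rewrite n1E n2E !exprMn sqrrN -mulrDr addrC -LL exprVn mulVf // expf_neq0 // lt0r_neq0 //.
have Hv' (t : R) : 0 < t < 1 -> Gp *m ((1 - t) *: p1 + t *: p2) + wp = Gm *m ((1 - t) *: p1 + t *: p2) + wm.
  by move=> ht; apply: Hv; exists t.
have h2 : 0 < (2^-1 : R) < 1 by apply/andP; split; lra.
have h4 : 0 < (4^-1 : R) < 1 by apply/andP; split; lra.
have X1 := congr1 (@xc R) (Hv' _ h2). have X2 := congr1 (@xc R) (Hv' _ h4).
have Y1 := congr1 (@yc R) (Hv' _ h2). have Y2 := congr1 (@yc R) (Hv' _ h4).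
rewrite !xyE in X1 X2 Y1 Y2.
have Z1 : (Gp ord0 ord0 - Gm ord0 ord0) * dx + (Gp ord0 ord_max - Gm ord0 ord_max) * dy = 0.
  rewrite /dx /dy !xyE; lra.
have Z2 : (Gp ord_max ord0 - Gm ord_max ord0) * dx + (Gp ord_max ord_max - Gm ord_max ord_max) * dy = 0.
  rewrite /dx /dy !xyE; lra.
have S1 := congr1 (@xc R) Hs. have S2 := congr1 (@yc R) Hs.
rewrite /xc /yc !mul2E !sigmaE /= -/(xc _) -/(yc _) in S1 S2.
rewrite tr2E tr2E in Htr.
rewrite !frob2E.
set n1 := xc (nrm p1 p2) in un S1 S2 n1E. set n2 := yc (nrm p1 p2) in un S1 S2 n2E.
have E1 : 2*mup*(Gp ord0 ord0*n1 + (Gp ord0 ord_max+Gp ord_max ord0)/2*n2) - qp*n1 = 2*mum*(Gm ord0 ord0*n1 + (Gm ord0 ord_max+Gm ord_max ord0)/2*n2) - qm*n1.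
  by apply: (@eq_via _ _ _ _ _ S1); field.
have E2 : 2*mup*((Gp ord0 ord_max+Gp ord_max ord0)/2*n1 + Gp ord_max ord_max*n2) - qp*n2 = 2*mum*((Gm ord0 ord_max+Gm ord_max ord0)/2*n1 + Gm ord_max ord_max*n2) - qm*n2.
  by apply: (@eq_via _ _ _ _ _ S2); field.
have D1 : (Gp ord0 ord0 - Gm ord0 ord0) * n2 - (Gp ord0 ord_max - Gm ord0 ord_max) * n1 = 0.
  rewrite n1E n2E.
  have -> : (Gp ord0 ord0 - Gm ord0 ord0) * (L^-1 * dx) - (Gp ord0 ord_max - Gm ord0 ord_max) * (L^-1 * - dy) = L^-1 * ((Gp ord0 ord0 - Gm ord0 ord0) * dx + (Gp ord0 ord_max - Gm ord0 ord_max) * dy) by ring.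
  by rewrite Z1 mulr0.
have D2 : (Gp ord_max ord0 - Gm ord_max ord0) * n2 - (Gp ord_max ord_max - Gm ord_max ord_max) * n1 = 0.
  rewrite n1E n2E.
  have -> : (Gp ord_max ord0 - Gm ord_max ord0) * (L^-1 * dx) - (Gp ord_max ord_max - Gm ord_max ord_max) * (L^-1 * - dy) = L^-1 * ((Gp ord_max ord0 - Gm ord_max ord0) * dx + (Gp ord_max ord_max - Gm ord_max ord_max) * dy) by ring.
  by rewrite Z2 mulr0.
exact: (@core R _ _ _ _ _ _ _ _ _ _ _ _ _ _ mup0 mum0 un E1 E2 D1 D2 Htr).
Qed.
End MX.


Section Geo.
Variable R : realType.

Lemma bary_fwd (a1 a2 b1 b2 c1 c2 l1 l2 l3 : R) :
  (b1-a1)*(c2-a2) - (b2-a2)*(c1-a1) != 0 -> l1 + l2 + l3 = 1 ->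
  ((l1*a1 + l2*b1 + l3*c1 - a1)*(c2-a2) - (l1*a2 + l2*b2 + l3*c2 - a2)*(c1-a1)) / ((b1-a1)*(c2-a2) - (b2-a2)*(c1-a1)) = l2 /\
  ((b1-a1)*(l1*a2 + l2*b2 + l3*c2 - a2) - (b2-a2)*(l1*a1 + l2*b1 + l3*c1 - a1)) / ((b1-a1)*(c2-a2) - (b2-a2)*(c1-a1)) = l3.
Proof.
move=> D0 s; have -> : l1 = 1 - l2 - l3 by lra.
by split; field.
Qed.

Lemma bary_bwd (a1 a2 b1 b2 c1 c2 x : R) (D := (b1-a1)*(c2-a2) - (b2-a2)*(c1-a1)) (x2 : R) :
  D != 0 ->
  let lb := ((x - a1)*(c2-a2) - (x2 - a2)*(c1-a1)) / D in
  let lc := ((b1-a1)*(x2-a2) - (b2-a2)*(x-a1)) / D in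
  x = (1 - lb - lc) * a1 + lb * b1 + lc * c1 /\ x2 = (1 - lb - lc) * a2 + lb * b2 + lc * c2.
Proof. by move=> D0 lb lc; rewrite /lb /lc /D in D0 *; split; field. Qed.

Lemma small_t (D num w1 w2 d1 d2 e P : R) : D != 0 -> num = d1*w2 - d2*w1 ->
  w1^+2 + w2^+2 <= P^+2 -> 36 * e^+2 * P^+2 = D^+2 -> d1^+2 < e^+2 -> d2^+2 < e^+2 ->
  0 < 3^-1 + num / D.
Proof.
move=> D0 hn hw he h1 h2.
have L : num^+2 <= (d1^+2 + d2^+2) * (w1^+2 + w2^+2).
  have -> : (d1^+2 + d2^+2) * (w1^+2 + w2^+2) = num^+2 + (d1*w1 + d2*w2)^+2 by rewrite hn; ring.
  by rewrite lerDl sqr_ge0.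
have L2 : (d1^+2 + d2^+2) * (w1^+2 + w2^+2) <= (2 * e^+2) * P^+2.
  apply: ler_pM; [|apply: addr_ge0; exact: sqr_ge0|lra|exact: hw].
  apply: addr_ge0; exact: sqr_ge0.
have D2 : 0 < D^+2 by rewrite exprn_even_gt0.
have tt : (num / D)^+2 <= 18^-1.
  rewrite expr_div_n ler_pdivrMr // -he.
  have : 0 <= e^+2 * P^+2 by apply: mulr_ge0; exact: sqr_ge0.
  lra.
set t := num / D in tt *.
nra.
Qed.

Lemma quad (F0 n1 n2 d1 d2 : R) : n1^+2 + n2^+2 = 1 -> 0 <= F0 ->
  (0 <= n1 -> 0 < d1) -> (n1 < 0 -> d1 < 0) -> (0 <= n2 -> 0 < d2) -> (n2 < 0 -> d2 < 0) ->
  0 < F0 + n1 * d1 + n2 * d2.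
Proof.
move=> un F h1 h1' h2 h2'.
have A1 : 0 <= n1 * d1.
  case: (leP 0 n1) => h; first by apply: mulr_ge0 => //; apply: ltW; exact: h1.
  by apply: ltW; rewrite nmulr_rgt0 //; exact: h1'.
have A2 : 0 <= n2 * d2.
  case: (leP 0 n2) => h; first by apply: mulr_ge0 => //; apply: ltW; exact: h2.
  by apply: ltW; rewrite nmulr_rgt0 //; exact: h2'.
have [n10|n10] := eqVneq n1 0.
  have n20 : n2 != 0 by apply/eqP => n20; move: un; rewrite n10 n20 expr0n /= addr0 => /eqP; rewrite eq_sym oner_eq0.
  have A2' : 0 < n2 * d2.
    case: (leP 0 n2) => h; first by apply: mulr_gt0; [rewrite lt_neqAle eq_sym n20 h|exact: h2].
    by rewrite nmulr_rgt0 //; exact: h2'.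
  lra.
have A1' : 0 < n1 * d1.
  case: (leP 0 n1) => h; first by apply: mulr_gt0; [rewrite lt_neqAle eq_sym n10 h|exact: h1].
  by rewrite nmulr_rgt0 //; exact: h1'.
lra.
Qed.

Lemma seg_nsq (u1 u2 v1 v2 y1 y2 t D2 : R) : 0 <= t <= 1 ->
  (u1 - y1)^+2 + (u2 - y2)^+2 <= D2 -> (v1 - y1)^+2 + (v2 - y2)^+2 <= D2 ->
  ((1-t)*u1 + t*v1 - y1)^+2 + ((1-t)*u2 + t*v2 - y2)^+2 <= D2.
Proof.
move=> /andP [t0 t1] hu hv.
have -> : ((1-t)*u1 + t*v1 - y1)^+2 + ((1-t)*u2 + t*v2 - y2)^+2 =
  (1-t) * ((u1 - y1)^+2 + (u2 - y2)^+2) + t * ((v1 - y1)^+2 + (v2 - y2)^+2) - t*(1-t)*((u1-v1)^+2 + (u2-v2)^+2) by ring.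
have : 0 <= t*(1-t)*((u1-v1)^+2 + (u2-v2)^+2).
  apply: mulr_ge0; [apply: mulr_ge0; lra|apply: addr_ge0; exact: sqr_ge0].
have : (1-t) * ((u1 - y1)^+2 + (u2 - y2)^+2) <= (1-t) * D2 by apply: ler_wpM2l; lra.
have : t * ((v1 - y1)^+2 + (v2 - y2)^+2) <= t * D2 by apply: ler_wpM2l; lra.
lra.
Qed.

End Geo.


Section Geo2.
Variable R : realType.
Implicit Types a b c p x y u v w : 'cV[R]_2.

Definition dsq x y : R := (xc x - xc y)^+2 + (yc x - yc y)^+2.

Lemma dsqC x y : dsq x y = dsq y x. Proof. rewrite /dsq; ring. Qed.
Lemma dsq_ge0 x y : 0 <= dsq x y. Proof. by apply: addr_ge0; exact: sqr_ge0. Qed.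
Lemma normv_ge0 u : 0 <= normv u. Proof. exact: sqrtr_ge0. Qed.
Lemma normv_sq x y : normv (x - y) ^+ 2 = dsq x y.
Proof.
rewrite /normv /dotv !xcB !ycB sqr_sqrtr; last by rewrite -!expr2 addr_ge0 ?sqr_ge0.
by rewrite /dsq -!expr2.
Qed.

Lemma cseg_coord u v x : cseg u v x -> exists t : R, 0 <= t <= 1 /\ xc x = (1-t)*xc u + t*xc v /\ yc x = (1-t)*yc u + t*yc v.
Proof. by move=> [t [ht ->]]; exists t; rewrite !xyE. Qed.

Lemma cseg_dsq u v x y D2 : cseg u v x -> dsq u y <= D2 -> dsq v y <= D2 -> dsq x y <= D2.
Proof.
move=> /cseg_coord [t [ht [hx hy]]] hu hv; rewrite /dsq hx hy.
exact: seg_nsq.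
Qed.
Arguments cseg_dsq {u v x y D2}.

Lemma bd_dsq {a b c x y D2} : 0 <= D2 -> dsq a b <= D2 -> dsq b c <= D2 -> dsq c a <= D2 ->
  tri_bd a b c x -> tri_bd a b c y -> dsq x y <= D2.
Proof.
move=> D0 hab hbc hca hx hy.
have hv (w : 'cV[R]_2) : (w = a \/ w = b \/ w = c) -> dsq x w <= D2.
  have vv (z : 'cV[R]_2) : dsq z z <= D2 by rewrite /dsq !subrr expr0n /= addr0.
  move=> hw.
  have hab' := hab; have hbc' := hbc; have hca' := hca.
  rewrite dsqC in hab'; rewrite dsqC in hbc'; rewrite dsqC in hca'.
  case: hx => [[hx|hx]|hx]; (apply: cseg_dsq hx _ _); by case: hw => [->|[->|->]].
have hx' (w : 'cV[R]_2) : (w = a \/ w = b \/ w = c) -> dsq w x <= D2 by move=> hw; rewrite dsqC; exact: hv.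
rewrite dsqC.
case: hy => [[hy|hy]|hy]; apply: (cseg_dsq hy); apply: hx'; tauto.
Qed.

Lemma diam_ge0 a b c : 0 <= diam a b c.
Proof. by rewrite /diam le_max normv_ge0. Qed.

Lemma bd_dist a b c p1 p2 : tri_bd a b c p1 -> tri_bd a b c p2 -> normv (p2 - p1) <= diam a b c.
Proof.
move=> h1 h2.
have d0 := diam_ge0 a b c.
have e1 : normv (b - a) <= diam a b c by rewrite /diam le_max lexx.
have e2 : normv (c - b) <= diam a b c by rewrite /diam le_max le_max lexx orbT.
have e3 : normv (a - c) <= diam a b c by rewrite /diam le_max le_max lexx !orbT.
have sq (u v : 'cV[R]_2) : normv (u - v) <= diam a b c -> dsq u v <= diam a b c ^+ 2.
  move=> h; rewrite -normv_sq; have := normv_ge0 (u - v); nra.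
have hab : dsq a b <= diam a b c ^+ 2 by rewrite dsqC; exact: sq _ _ e1.
have hbc : dsq b c <= diam a b c ^+ 2 by rewrite dsqC; exact: sq _ _ e2.
have hca : dsq c a <= diam a b c ^+ 2 by rewrite dsqC; exact: sq _ _ e3.
have := bd_dsq (sqr_ge0 (diam a b c)) hab hbc hca h2 h1.
rewrite -normv_sq => h; have := normv_ge0 (p2 - p1); nra.
Qed.
End Geo2.


Section Meas.
Variable R : realType.
Lemma meas_aff (g : R -> R -> R) : (exists a b c, forall u v, g u v = (a*u+b*v+c)%R) ->
  measurable [set p : R * R | (0 < g p.1 p.2)%R].
Proof.
move=> [a [b [c hg]]].
have mf : measurable_fun [set: R * R] (fun p : R * R => (a * p.1 + b * p.2 + c)%R).
  apply: measurable_funD; last exact: measurable_cst.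
  apply: measurable_funD.
  - apply: measurable_funM; first exact: measurable_cst. exact: measurable_fst.
  - apply: measurable_funM; first exact: measurable_cst. exact: measurable_snd.
have := mf measurableT `]0%R, +oo[%classic (measurable_itv _).
rewrite setTI. congr measurable. apply/seteqP; split => p /=; rewrite in_itv /= andbT hg //.
Qed.
Lemma itv_meas (l e : R) : 0 < e -> @lebesgue_measure R `]l, l + e[%classic = e%:E.
Proof.
move=> e0; rewrite lebesgue_measure_itv /= lte_fin ltrDl e0 -EFinD.
by congr (_%:E); rewrite addrC addKr.
Qed.
Lemma rect_meas (l1 l2 e : R) : 0 < e ->
  ((@lebesgue_measure R) \x (@lebesgue_measure R))%E (`]l1, l1 + e[%classic `*` `]l2, l2+e[%classic) = (e * e)%:E.
Proof.
move=> e0. rewrite product_measure1E; [|exact: measurable_itv|exact: measurable_itv].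
transitivity (e%:E * e%:E)%E; last by [].
by congr (_ * _)%E; apply: itv_meas.
Qed.
Lemma area_lb (S : set 'cV[R]_2) (l1 l2 e K : R) : 0 < e ->
  measurable [set p : R*R | S (mkv p.1 p.2)] ->
  (forall u v, S (mkv u v) -> -K < u < K /\ -K < v < K) ->
  (forall u v, l1 < u < l1 + e -> l2 < v < l2 + e -> S (mkv u v)) ->
  e * e <= area S.
Proof.
move=> e0 mS bS inS.
have [hu hv] : l1 < l1 + e/2 < l1 + e /\ l2 < l2 + e/2 < l2 + e by split; apply/andP; split; lra.
have [/andP [K1 K2] _] := bS _ _ (inS _ _ hu hv).
have K0 : 0 < K + K by lra.
have sub1 : (`]l1, l1 + e[%classic `*` `]l2, l2+e[%classic) `<=` [set p : R*R | S (mkv p.1 p.2)].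
  move=> [u v] /= [hu' hv']; apply: inS; move: hu' hv'; by rewrite /= !in_itv /=.
have sub2 : [set p : R*R | S (mkv p.1 p.2)] `<=` (`](-K), -K + (K + K)[%classic `*` `](-K), -K + (K+K)[%classic).
  move=> [u v] /= /bS [/andP [h1 h2] /andP [h3 h4]]; split => /=; rewrite in_itv /=; apply/andP; split; lra.
have mR (a b c : R) : (`]a, b[%classic `*` `]a, c[%classic) \in measurable.
  by rewrite inE; apply: measurableX; exact: measurable_itv.
have mR' (a b c d : R) : (`]a, b[%classic `*` `]c, d[%classic) \in measurable.
  by rewrite inE; apply: measurableX; exact: measurable_itv.
have mS' : [set p : R*R | S (mkv p.1 p.2)] \in measurable by rewrite inE.
have le1 : ((e*e)%:E <= lam2 S)%E.
  rewrite -(@rect_meas l1 l2 e e0) /lam2. apply: le_measure => //.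
have le2 : (lam2 S <= ((K+K)*(K+K))%:E)%E.
  rewrite -(@rect_meas (-K) (-K) (K+K) K0) /lam2. apply: le_measure => //.
rewrite /area.
set m := lam2 S in le1 le2 *.
have fm : m \is a fin_num.
  rewrite ge0_fin_numE; first exact: (le_lt_trans le2 (ltry _)).
  by apply: (le_trans _ le1); rewrite lee_fin mulr_ge0 // ltW.
by rewrite -lee_fin fineK.
Qed.
End Meas.


Section Geo3.
Variable R : realType.
Implicit Types a b c p x y u v w : 'cV[R]_2.

Definition lbf a b c x := ((xc x - xc a)*(yc c - yc a) - (yc x - yc a)*(xc c - xc a)) / tri_det a b c.
Definition lcf a b c x := ((xc b - xc a)*(yc x - yc a) - (yc b - yc a)*(xc x - xc a)) / tri_det a b c.
Definition laf a b c x := 1 - lbf a b c x - lcf a b c x.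

Lemma tri_detE a b c : tri_det a b c = (xc b - xc a)*(yc c - yc a) - (yc b - yc a)*(xc c - xc a).
Proof. by rewrite /tri_det !xyE. Qed.

Lemma tri_iff a b c x : tri_nondeg a b c ->
  tri a b c x <-> [/\ 0 < laf a b c x, 0 < lbf a b c x & 0 < lcf a b c x].
Proof.
rewrite /tri_nondeg tri_detE => D0; split.
- move=> [l1 [l2 [l3 [h1 h2 h3 s ->]]]].
  have [eb ec] := @bary_fwd _ (xc a) (yc a) (xc b) (yc b) (xc c) (yc c) l1 l2 l3 D0 s.
  have eb' : lbf a b c (l1 *: a + l2 *: b + l3 *: c) = l2 by rewrite /lbf tri_detE !xyE.
  have ec' : lcf a b c (l1 *: a + l2 *: b + l3 *: c) = l3 by rewrite /lcf tri_detE !xyE.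
  by rewrite /laf eb' ec'; split => //; lra.
- move=> [ha hb hc]; exists (laf a b c x), (lbf a b c x), (lcf a b c x); split => //.
    rewrite /laf; ring.
  have [e1 e2] := @bary_bwd _ (xc a) (yc a) (xc b) (yc b) (xc c) (yc c) (xc x) (yc x) D0.
  apply: cv2P; rewrite !xyE /laf /lbf /lcf tri_detE; [exact: e1|exact: e2].
Qed.

Lemma tri_box a b c x : tri a b c x ->
  let K := `|xc a| + `|xc b| + `|xc c| + `|yc a| + `|yc b| + `|yc c| + 1 in
  -K < xc x < K /\ -K < yc x < K.
Proof.
move=> [l1 [l2 [l3 [h1 h2 h3 s ->]]]] K; rewrite !xyE.
have B (l z : R) : 0 < l -> -(l * `|z|) <= l * z <= l * `|z|.
  move=> l0; rewrite -mulrN !ler_pM2l // -ler_norml; exact: lexx.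
have /andP [A1 A2] := B _ (xc a) h1. have /andP [A3 A4] := B _ (xc b) h2. have /andP [A5 A6] := B _ (xc c) h3.
have /andP [C1 C2] := B _ (yc a) h1. have /andP [C3 C4] := B _ (yc b) h2. have /andP [C5 C6] := B _ (yc c) h3.
have n1 := normr_ge0 (xc a); have n2 := normr_ge0 (xc b); have n3 := normr_ge0 (xc c).
have n4 := normr_ge0 (yc a); have n5 := normr_ge0 (yc b); have n6 := normr_ge0 (yc c).
have D1 : l1 * `|xc a| <= `|xc a| by rewrite ler_piMl //; lra.
have D2 : l2 * `|xc b| <= `|xc b| by rewrite ler_piMl //; lra.
have D3 : l3 * `|xc c| <= `|xc c| by rewrite ler_piMl //; lra.
have D4 : l1 * `|yc a| <= `|yc a| by rewrite ler_piMl //; lra.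
have D5 : l2 * `|yc b| <= `|yc b| by rewrite ler_piMl //; lra.
have D6 : l3 * `|yc c| <= `|yc c| by rewrite ler_piMl //; lra.
rewrite /K; split; apply/andP; split; lra.
Qed.

Lemma aff_ex (g : R -> R -> R) : (forall u v : R, g u v = g 0 0 + (g 1 0 - g 0 0) * u + (g 0 1 - g 0 0) * v) ->
  exists a b c : R, forall u v : R, g u v = a*u+b*v+c.
Proof. move=> h; exists (g 1 0 - g 0 0), (g 0 1 - g 0 0), (g 0 0) => u v; rewrite h; ring. Qed.

Lemma meas_T a b c (g : 'cV[R]_2 -> R) : tri_nondeg a b c ->
  (exists al be ga : R, forall u v : R, g (mkv u v) = al*u+be*v+ga) ->
  measurable [set p : R*R | tri a b c (mkv p.1 p.2) /\ 0 < g (mkv p.1 p.2)].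
Proof.
move=> D0 hg.
have D0' : tri_det a b c != 0 by [].
have aff (f : 'cV[R]_2 -> R) : (forall u v : R, f (mkv u v) = f (mkv 0 0) + (f (mkv 1 0) - f (mkv 0 0)) * u + (f (mkv 0 1) - f (mkv 0 0)) * v) -> measurable [set p : R*R | 0 < f (mkv p.1 p.2)].
  move=> h; exact: (@meas_aff R (fun u v : R => f (mkv u v)) (@aff_ex (fun u v : R => f (mkv u v)) h)).
have ma : measurable [set p : R*R | 0 < laf a b c (mkv p.1 p.2)].
  apply: aff => u v; rewrite /laf /lbf /lcf !xc_mkv !yc_mkv; field; exact: D0'.
have mb : measurable [set p : R*R | 0 < lbf a b c (mkv p.1 p.2)].
  apply: aff => u v; rewrite /laf /lbf /lcf !xc_mkv !yc_mkv; field; exact: D0'.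
have mc : measurable [set p : R*R | 0 < lcf a b c (mkv p.1 p.2)].
  apply: aff => u v; rewrite /laf /lbf /lcf !xc_mkv !yc_mkv; field; exact: D0'.
have mg : measurable [set p : R*R | 0 < g (mkv p.1 p.2)] by exact: (@meas_aff R (fun u v : R => g (mkv u v)) hg).
have -> : [set p : R*R | tri a b c (mkv p.1 p.2) /\ 0 < g (mkv p.1 p.2)] =
  [set p : R*R | 0 < laf a b c (mkv p.1 p.2)] `&` [set p : R*R | 0 < lbf a b c (mkv p.1 p.2)] `&`
  [set p : R*R | 0 < lcf a b c (mkv p.1 p.2)] `&` [set p : R*R | 0 < g (mkv p.1 p.2)].
  apply/seteqP; split => p /=.
  - by move=> [/(@tri_iff a b c _ D0) [h1 h2 h3] h4].
  - by move=> [[[h1 h2] h3] h4]; split => //; apply/(@tri_iff a b c _ D0).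
by apply: measurableI => //; apply: measurableI => //; apply: measurableI.
Qed.

End Geo3.


Section Main.
Variable R : realType.
Implicit Types a b c p x y w : 'cV[R]_2.

Lemma perim a b c : tri_nondeg a b c ->
  let P := normv (b - a) + normv (c - b) + normv (a - c) in
  [/\ 0 < P, dsq c a <= P^+2, dsq a b <= P^+2 & dsq b c <= P^+2].
Proof.
move=> D0 P; rewrite /tri_nondeg tri_detE in D0.
have n1 := normv_ge0 (b - a); have n2 := normv_ge0 (c - b); have n3 := normv_ge0 (a - c).
have s1 : dsq b a <= P^+2 by rewrite -normv_sq; rewrite /P; nra.
have s2 : dsq c b <= P^+2 by rewrite -normv_sq; rewrite /P; nra.
have s3 : dsq a c <= P^+2 by rewrite -normv_sq; rewrite /P; nra.
have Lg : ((xc b - xc a)*(yc c - yc a) - (yc b - yc a)*(xc c - xc a))^+2 <= dsq b a * dsq a c.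
  have -> : dsq b a * dsq a c = ((xc b - xc a)*(yc c - yc a) - (yc b - yc a)*(xc c - xc a))^+2 + ((xc b - xc a)*(xc c - xc a) + (yc b - yc a)*(yc c - yc a))^+2 by rewrite /dsq; ring.
  by rewrite lerDl sqr_ge0.
have Dp : 0 < ((xc b - xc a)*(yc c - yc a) - (yc b - yc a)*(xc c - xc a))^+2 by rewrite exprn_even_gt0.
split.
- rewrite lt_neqAle; apply/andP; split; last by rewrite /P; lra.
  apply/eqP => P0; move: s1 s3; rewrite -P0 expr0n /= => s1 s3.
  have := dsq_ge0 b a; have := dsq_ge0 a c. nra.
- by rewrite dsqC.
- by rewrite dsqC.
- by rewrite dsqC.
Qed.

Lemma sq_in a b c (u v : R) : tri_nondeg a b c ->
  let e := inradius a b c / 6 in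
  (u - (xc a + xc b + xc c) / 3)^+2 < e^+2 -> (v - (yc a + yc b + yc c) / 3)^+2 < e^+2 ->
  tri a b c (mkv u v).
Proof.
move=> D0 e hu hv.
have [P0 Sca Sab Sbc] := perim D0.
set P := normv (b - a) + normv (c - b) + normv (a - c) in P0 Sca Sab Sbc.
have D0' := D0; rewrite /tri_nondeg in D0'.
have he : 36 * e^+2 * P^+2 = tri_det a b c ^+2.
  rewrite /e /inradius -/P -(real_normK (num_real (tri_det a b c))).
  field; exact: lt0r_neq0.
apply/(tri_iff _ D0); split.
- have -> : laf a b c (mkv u v) = 3^-1 + ((u - (xc a + xc b + xc c) / 3) * (yc b - yc c) - (v - (yc a + yc b + yc c) / 3) * (xc b - xc c)) / tri_det a b c.
    by rewrite /laf /lbf /lcf tri_detE !xc_mkv !yc_mkv; field; move: D0'; rewrite tri_detE.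
  apply: (small_t D0' erefl _ he hu hv).
  by move: Sbc; rewrite /dsq.
- have -> : lbf a b c (mkv u v) = 3^-1 + ((u - (xc a + xc b + xc c) / 3) * (yc c - yc a) - (v - (yc a + yc b + yc c) / 3) * (xc c - xc a)) / tri_det a b c.
    by rewrite /laf /lbf /lcf tri_detE !xc_mkv !yc_mkv; field; move: D0'; rewrite tri_detE.
  apply: (small_t D0' erefl _ he hu hv).
  by move: Sca; rewrite /dsq.
- have -> : lcf a b c (mkv u v) = 3^-1 + ((u - (xc a + xc b + xc c) / 3) * (yc a - yc b) - (v - (yc a + yc b + yc c) / 3) * (xc a - xc b)) / tri_det a b c.
    by rewrite /laf /lbf /lcf tri_detE !xc_mkv !yc_mkv; field; move: D0'; rewrite tri_detE.
  apply: (small_t D0' erefl _ he hu hv).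
  by move: Sab; rewrite /dsq.
Qed.


Lemma final_ineq (h L J e rho K Fb Ab Ao Fo r : R) :
  0 <= h -> 0 <= L -> L <= h -> 0 <= J -> h <= rho * r -> r = 6 * e -> J <= K * Fb ->
  e * e <= Ab -> 0 <= Fb -> 0 <= K -> 0 <= Ao * Fo ->
  h * (L * J) <= (36 * rho^+2 * K + 1) * (Ab * Fb + Ao * Fo).
Proof.
move=> h0 L0 Lh J0 hr re JK eA F0 K0 AF.
have s1 : h * (L * J) <= h * h * J by rewrite -mulrA; apply: ler_wpM2l => //; apply: ler_wpM2r.
have s2 : h * h <= 36 * rho^+2 * (e * e).
  have : h * h <= (rho * r) * (rho * r) by apply: ler_pM.
  by rewrite re; nra.
have e0 : 0 <= e * e by exact: mul_self_ge0 || nra.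
have s3 : h * h * J <= 36 * rho^+2 * (e * e) * (K * Fb).
  apply: (le_trans (ler_wpM2r J0 s2)); apply: ler_wpM2l => //.
  by apply: mulr_ge0; [apply: mulr_ge0; [lra|exact: sqr_ge0]|].
have KF : 0 <= K * Fb by apply: mulr_ge0.
have s4 : 36 * rho^+2 * (e * e) * (K * Fb) <= 36 * rho^+2 * K * (Ab * Fb).
  have -> : 36 * rho^+2 * (e * e) * (K * Fb) = 36 * rho^+2 * K * ((e * e) * Fb) by ring.
  apply: ler_wpM2l; first by apply: mulr_ge0 => //; apply: mulr_ge0; [lra|exact: sqr_ge0].
  exact: ler_wpM2r.
have AbF : 0 <= Ab * Fb by apply: mulr_ge0 => //; lra.
have s5 : 36 * rho^+2 * K * (Ab * Fb) <= (36 * rho^+2 * K + 1) * (Ab * Fb + Ao * Fo).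
  have r2 : 0 <= 36 * rho^+2 * K by apply: mulr_ge0 => //; apply: mulr_ge0; [lra|exact: sqr_ge0].
  have := mulr_ge0 r2 AF. nra.
lra.
Qed.

Lemma area_ge0 (S : set 'cV[R]_2) : 0 <= area S.
Proof. by rewrite /area; apply: fine_ge0; exact: measure_ge0. Qed.

Lemma frob2_ge0 (G : 'M[R]_2) : 0 <= frob2 G.
Proof. by rewrite frob2E; do ! apply: addr_ge0; exact: sqr_ge0. Qed.

Lemma dot_aff p1 n (s : R) : exists al be ga : R, forall u v : R, s * dotv (mkv u v - p1) n = al*u+be*v+ga.
Proof.
apply: (@aff_ex _ (fun u v : R => s * dotv (mkv u v - p1) n)) => u v.
rewrite /dotv !xyE; ring.
Qed.

Lemma dot_aff1 p1 n : exists al be ga : R, forall u v : R, dotv (mkv u v - p1) n = al*u+be*v+ga.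
Proof.
apply: (@aff_ex _ (fun u v : R => dotv (mkv u v - p1) n)) => u v.
rewrite /dotv !xyE; ring.
Qed.
Lemma dot_affN p1 n : exists al be ga : R, forall u v : R, - dotv (mkv u v - p1) n = al*u+be*v+ga.
Proof.
apply: (@aff_ex _ (fun u v : R => - dotv (mkv u v - p1) n)) => u v.
rewrite /dotv !xyE; ring.
Qed.

End Main.

Unset Implicit Arguments.
Set Strict Implicit.

Theorem lemma5p6 (R : realType) (rho mup mum : R) :
  0 < mup -> 0 < mum ->
  exists C : R, 0 < C /\
    forall a b c p1 p2 : 'cV[R]_2,
      tri_nondeg a b c ->
      diam a b c <= rho * inradius a b c ->
      tri_bd a b c p1 -> tri_bd a b c p2 -> p1 != p2 ->
      Tplus a b c p1 p2 !=set0 -> Tminus a b c p1 p2 !=set0 ->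
      forall (Gp : 'M[R]_2) (wp : 'cV[R]_2) (qp : R)
             (Gm : 'M[R]_2) (wm : 'cV[R]_2) (qm : R),
        IFE mup mum p1 p2 Gp wp qp Gm wm qm ->
        diam a b c * jumpL2sq p1 p2 qp qm <= C * H1semi2 a b c p1 p2 Gp Gm.
Proof.
move=> mup0 mum0.
pose M := (1 + mup/mum + mum/mup)^+2.
pose K := 8*mup^+2 + 8*mum^+2 + (8*mup^+2 + 8*mum^+2) * (2 + 4*M).
have M0 : 0 <= M by exact: sqr_ge0.
have K0 : 0 <= K.
  rewrite /K; have := sqr_ge0 mup; have := sqr_ge0 mum; nra.
exists (36 * rho^+2 * K + 1); split.
  have : 0 <= 36 * rho^+2 * K by apply: mulr_ge0 => //; apply: mulr_ge0; [lra|exact: sqr_ge0].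
  lra.
move=> a b c p1 p2 D0 hrho h1 h2 p12 _ _ Gp wp qp Gm wm qm hife.
have [B1 B2 B3] := alg_bound mup0 mum0 p12 hife.
rewrite -/M in B1 B2 B3.
have Lh := bd_dist h1 h2.
have L0 := normv_ge0 (p2 - p1).
have h0 := diam_ge0 a b c.
have Fp0 := frob2_ge0 Gp. have Fm0 := frob2_ge0 Gm.
have J0 := sqr_ge0 (qp - qm).
have [P0 _ _ _] := perim D0.
set e := inradius a b c / 6.
have re : inradius a b c = 6 * e by rewrite /e; field.
have e0 : 0 < e.
  rewrite /e /inradius; apply: divr_gt0 => //; apply: divr_gt0 => //.
  by rewrite normr_gt0.
have un := nrm_unit p12.
set n1 := xc (nrm p1 p2) in un. set n2 := yc (nrm p1 p2) in un.
set g1 := (xc a + xc b + xc c) / 3. set g2 := (yc a + yc b + yc c) / 3.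
set F0 := dotv (mkv g1 g2 - p1) (nrm p1 p2).
have fE (u v : R) : dotv (mkv u v - p1) (nrm p1 p2) = F0 + n1 * (u - g1) + n2 * (v - g2).
  by rewrite /F0 /dotv -/n1 -/n2 !xcB !ycB !xc_mkv !yc_mkv; ring.
pose l (b : bool) (g : R) := if b then g else g - e.
have lP (bb : bool) (g u : R) : l bb g < u < l bb g + e -> (u - g)^+2 < e^+2 /\ (bb -> 0 < u - g) /\ (~~ bb -> u - g < 0).
  rewrite /l; case: bb => /andP [hu1 hu2]; (split; [|split]) => //; try nra; lra.
have K1 : (qp - qm)^+2 <= K * frob2 Gp.
  rewrite /K; have := sqr_ge0 mum; have := sqr_ge0 mup; nra.
have K2 : (qp - qm)^+2 <= K * frob2 Gm.
  rewrite /K; have := sqr_ge0 mum; have := sqr_ge0 mup; nra.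
rewrite /jumpL2sq /H1semi2.
have [F0p|F0n] := leP 0 F0.
-
  have Ab : e * e <= area (Tplus a b c p1 p2).
    apply: (@area_lb _ _ (l (0 <= n1) g1) (l (0 <= n2) g2) e (`|xc a| + `|xc b| + `|xc c| + `|yc a| + `|yc b| + `|yc c| + 1) e0).
    + exact: (@meas_T _ _ _ _ (fun x => dotv (x - p1) (nrm p1 p2)) D0 (dot_aff1 p1 (nrm p1 p2))).
    + by move=> u v [ht _]; have := tri_box ht; rewrite /= xc_mkv yc_mkv.
    + move=> u v /lP [hu [hu1 hu2]] /lP [hv [hv1 hv2]]; split; first exact: sq_in.
      rewrite fE; apply: quad => //; move=> h;
        first [apply: hu2 | apply: hv2 | exact: hu1 | exact: hv1]; by rewrite -?ltNge.
  apply: (final_ineq h0 L0 Lh J0 hrho re K1 Ab Fp0 K0).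
  by apply: mulr_ge0 => //; exact: area_ge0.
-
  have un' : (- n1)^+2 + (- n2)^+2 = 1 by rewrite !sqrrN.
  have Ab : e * e <= area (Tminus a b c p1 p2).
    apply: (@area_lb _ _ (l (0 <= - n1) g1) (l (0 <= - n2) g2) e (`|xc a| + `|xc b| + `|xc c| + `|yc a| + `|yc b| + `|yc c| + 1) e0).
    + have -> : [set p : R * R | Tminus a b c p1 p2 (mkv p.1 p.2)] =
        [set p : R * R | tri a b c (mkv p.1 p.2) /\ 0 < (fun x => - dotv (x - p1) (nrm p1 p2)) (mkv p.1 p.2)].
        by apply/seteqP; split => p /= [hA hB]; split => //; rewrite ?oppr_gt0 // -oppr_gt0.
      exact: (@meas_T _ _ _ _ (fun x => - dotv (x - p1) (nrm p1 p2)) D0 (dot_affN p1 (nrm p1 p2))).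
    + by move=> u v [ht _]; have := tri_box ht; rewrite /= xc_mkv yc_mkv.
    + move=> u v /lP [hu [hu1 hu2]] /lP [hv [hv1 hv2]]; split; first exact: sq_in.
      have : 0 < - F0 + (- n1) * (u - g1) + (- n2) * (v - g2).
        apply: quad => //; first lra; move=> h;
          first [apply: hu2 | apply: hv2 | exact: hu1 | exact: hv1]; by rewrite -?ltNge.
      rewrite fE; lra.
  rewrite [area (Tplus _ _ _ _ _) * _ + _]addrC.
  apply: (final_ineq h0 L0 Lh J0 hrho re K2 Ab Fm0 K0).
  by apply: mulr_ge0 => //; exact: area_ge0.
Qed.
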